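(* Let $n\ge 2$. Every $1$-Costas permutation $\pi$ of $\{1,\ldots,n\}$ satisfies $\delta(\pi)\ge\lceil n/2\rceil$, and there exists a $1$-Costas permutation $\pi^*$ of $\{1,\ldots,n\}$ with $\delta(\pi^* )=\lceil n/2\rceil$. Such a $\pi^*$ is given, according to the parity of $n$, by the permutation matrix: (i) if $n=2k$: $P_{\pi^*}=\Pi_k\oplus L_k\Pi_k$; (ii) if $n=2k+1$ with $k$ even: $P_{\pi^*}=\begin{bmatrix} O & L_{k+1}\Pi_{k+1}\\ \Pi_k & O\end{bmatrix}$; (iii) if $n=2k+1$ with $k$ odd: $P_{\pi^*}=\begin{bmatrix} O & L_{k+1}\Pi_{k+1}L_{k+1}\\ \Pi_k L_k & O\end{bmatrix}$. Moreover, in each case $\pi^*$ attains the minimum of the global variation $\Delta(\pi)$ over all $1$-Costas permutations $\pi$ of $\{1,\ldots,n\}$, and this minimum equals $n^2/4$ if $n$ is even and $(n^2+3)/4$ if $n$ is odd.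
   Context: For a permutation $\pi=(\pi_1,\ldots,\pi_n)$ of $\{1,\ldots,n\}$: its discrete derivative is $D(\pi)=(\pi_2-\pi_1,\ldots,\pi_n-\pi_{n-1})$; its local variation is $\delta(\pi)=\max_i|\pi_{i+1}-\pi_i|$; its global variation is $\Delta(\pi)=\sum_{i=1}^{n-1}|\pi_{i+1}-\pi_i|$. $\pi$ is $1$-Costas if the $n-1$ entries of $D(\pi)$ are pairwise distinct. $P_\pi$ is the $n\times n$ permutation matrix with $1$ in positions $(i,\pi_i)$ and $0$ elsewhere. $L_m$ is the $m\times m$ backward identity matrix (ones in positions $(i,m+1-i)$), so $L_mP$ reverses the order of the rows of $P$ and $PL_m$ reverses the order of its columns. For $m\ge1$, $\Pi_m=P_{\pi_{(m)}}$ where $\pi_{(m)}$ is the permutation of $\{1,\ldots,m\}$ defined by: if $m=2p$, $\pi_{(m)}=(p,p+1,p-1,p+2,p-2,\ldots,1,2p)$, i.e. $\pi_{(m)}(2j-1)=p+1-j$, $\pi_{(m)}(2j)=p+j$ for $1\le j\le p$; if $m=2p+1$, $\pi_{(m)}=(p+1,p+2,p,p+3,p-1,\ldots,2p+1,1)$, i.e. $\pi_{(m)}(2j-1)=p+2-j$ for $1\le j\le p+1$ and $\pi_{(m)}(2j)=p+1+j$ for $1\le j\le p$. (Its derivative is $(1,-2,3,-4,\ldots)$.) $A\oplus B$ denotes the block diagonal matrix; in (ii),(iii) the block $L_{k+1}\Pi_{k+1}$ (resp. $L_{k+1}\Pi_{k+1}L_{k+1}$) occupies rows $1,\ldots,k+1$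 and columns $k+1,\ldots,2k+1$, the $k\times k$ block occupies rows $k+2,\ldots,2k+1$ and columns $1,\ldots,k$, and $O$ denotes zero blocks. *)

(* Defs.v *)
From mathcomp Require Import all_boot all_order all_algebra all_fingroup.
Set Implicit Arguments. Unset Strict Implicit. Unset Printing Implicit Defensive.
Import GRing.Theory Num.Theory.

(* A permutation of {1,...,n} is represented by p : 'S_n, acting on 'I_n =
   {0,...,n-1}; entry pi_{i+1} of the paper corresponds to (p i) + 1.
   Differences are unaffected by this shift. *)

Definition pv n (p : 'S_n) (i : nat) : nat :=
  nth 0%N [seq (p j : nat) | j <- enum 'I_n] i.

Definition dderiv n (p : 'S_n) : seq int :=
  [seq ((pv p i.+1)%:Z - (pv p i)%:Z)%R | i <- iota 0 n.-1].

Definition costas1 n (p : 'S_n) : bool := uniq (dderiv p).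

Definition locvar n (p : 'S_n) : nat := \max_(d <- dderiv p) absz d.

Definition globvar n (p : 'S_n) : nat := \sum_(d <- dderiv p) absz d.

(* pi_(m) : 1-based position t |-> 1-based value *)
Definition piM (m t : nat) : nat :=
  let p := m./2 in
  if ~~ odd m then (if odd t then p.+1 - t.+1./2 else p + t./2)
  else (if odd t then p + 2 - t.+1./2 else p.+1 + t./2).

Definition PiMx (m : nat) : 'M[int]_m :=
  \matrix_(i < m, j < m) ((piM m i.+1 == j.+1)%:R)%R.

Definition Lmx (m : nat) : 'M[int]_m :=
  \matrix_(i < m, j < m) ((i + j == m.-1)%N%:R)%R.

Definition Pmx n (p : 'S_n) : 'M[int]_n := perm_mx p.

(* Main.v *)
Require Import Defs.
From mathcomp Require Import all_boot all_order all_algebra all_fingroup zify.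
Import GRing.Theory Num.Theory.
Set Implicit Arguments. Unset Strict Implicit.

Lemma pvE n (p : 'S_n) (i : 'I_n) : pv p i = p i.
Proof.
rewrite /pv (nth_map i) ?size_enum_ord //.
have -> : nth i (enum 'I_n) i = i by apply: val_inj; rewrite /= nth_enum_ord.
by [].
Qed.

Lemma dderivE n (p : 'S_n) (f : nat -> nat) :
  (forall i (H : (i < n)%N), f i = p (Ordinal H)) ->
  dderiv p = [seq ((f i.+1)%:Z - (f i)%:Z)%R | i <- iota 0 n.-1].
Proof.
move=> Hf; rewrite /dderiv; apply/eq_in_map => i; rewrite mem_iota add0n => Hi.
have Hi1 : (i.+1 < n)%N by lia.
have Hi0 : (i < n)%N by lia.
by rewrite (Hf _ Hi1) (Hf _ Hi0) -!(pvE p).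
Qed.
Definition Lset M : seq int :=
  [seq (Posz i.+1) | i <- iota 0 M] ++ [seq (- (Posz i.+1))%R | i <- iota 0 M].

Lemma mem_Lset M x : (x \in Lset M) = (x != 0%R) && (absz x <= M)%N.
Proof.
apply/idP/idP.
- by rewrite mem_cat => /orP[] /mapP[i]; rewrite mem_iota => /andP[_ Hi] ->;
  apply/andP; split; lia.
- move=> /andP[H1 H2]; rewrite mem_cat; apply/orP.
  case: x H1 H2 => [[|a]|a] H1 H2 //.
  + left; apply/mapP; exists a; rewrite ?mem_iota //; lia.
  + right; apply/mapP; exists a; rewrite ?mem_iota //; lia.
Qed.

Lemma uniq_Lset M : uniq (Lset M).
Proof.
rewrite cat_uniq; apply/and3P; split.
- by rewrite map_inj_uniq ?iota_uniq // => i j; lia.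
- by apply/hasPn => x /mapP[i _ ->]; apply/negP => /mapP[j _]; lia.
- by rewrite map_inj_uniq ?iota_uniq // => i j; lia.
Qed.

Lemma size_Lset M : size (Lset M) = (M + M)%N.
Proof. by rewrite size_cat !size_map size_iota. Qed.

Lemma sum_Lset M : (\sum_(x <- Lset M) x)%R = 0%R.
Proof. by rewrite big_cat !big_map /= sumrN addrN. Qed.

Lemma sumS_iota M : (2 * \sum_(i <- iota 0 M) i.+1)%N = (M * M.+1)%N.
Proof.
rewrite (_ : iota 0 M = index_iota 0 M); last by rewrite /index_iota subn0.
elim: M => [|M IH]; first by rewrite big_geq.
rewrite big_nat_recr //= mulnDr IH; lia.
Qed.

Lemma sumabs_Lset M : (\sum_(x <- Lset M) absz x)%N = (M * M.+1)%N.
Proof.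
rewrite big_cat !big_map /=.
have E : \sum_(j <- iota 0 M) absz (- (Posz j.+1))%R = \sum_(j <- iota 0 M) j.+1 by [].
rewrite -[in RHS](sumS_iota M).
rewrite mul2n -addnn; congr (_ + _)%N.
Qed.

Lemma size_le_L (s : seq int) M : uniq s ->
  (forall x, x \in s -> x != 0%R /\ (absz x <= M)%N) ->
  (size s <= M + M)%N /\ (size s = (M + M)%N -> (\sum_(x <- s) x)%R = 0%R).
Proof.
move=> Us Hs.
have sub : {subset s <= Lset M}.
  by move=> x /Hs [H1 H2]; rewrite mem_Lset H1 H2.
split; first by rewrite -size_Lset; apply: uniq_leq_size.
move=> Hsz.
have [_ Heq] := uniq_min_size Us sub (eq_leq (etrans (size_Lset M) (esym Hsz))).
have Hp : perm_eq s (Lset M) by apply: uniq_perm => //; exact: uniq_Lset.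
by rewrite (perm_big _ Hp) sum_Lset.
Qed.

Lemma exists_max (s : seq int) : s != [::] ->
  exists2 x, x \in s & forall y, y \in s -> (absz y <= absz x)%N.
Proof.
elim: s => [//|a t IH] _.
case: (altP (t =P [::])) => [->|Ht].
  by exists a; rewrite ?mem_seq1 // => y; rewrite mem_seq1 => /eqP ->.
have [b Hb Hmax] := IH Ht.
case: (leqP (absz a) (absz b)) => Hab.
- exists b; first by rewrite in_cons Hb orbT.
  by move=> y; rewrite in_cons => /orP[/eqP ->|/Hmax].
- exists a; first by rewrite in_cons eqxx.
  move=> y; rewrite in_cons => /orP[/eqP ->//|/Hmax]; lia.
Qed.

Fixpoint F m := if m is m'.+1 then (F m' + m'./2 + 1)%N else 0%N.

Lemma F_closed j : F (j + j) = (j * j.+1)%N /\ F (j + j).+1 = (j.+1 * j.+1)%N.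
Proof.
elim: j => [//|j [IH1 IH2]].
rewrite addSn addnS.
have E1 : F (j+j).+2 = (F (j+j).+1 + (j+j).+1./2 + 1)%N by [].
have E2 : F (j+j).+3 = (F (j+j).+2 + (j+j).+2./2 + 1)%N by [].
rewrite E2 E1 IH2.
have -> : (j + j).+1./2 = j by lia.
have -> : (j + j).+2./2 = j.+1 by lia.
split; lia.
Qed.

Lemma sum_rem (s : seq int) x : x \in s ->
  (\sum_(y <- s) absz y)%N = (absz x + \sum_(y <- rem x s) absz y)%N.
Proof. by move=> Hx; rewrite (perm_big _ (perm_to_rem Hx)) big_cons. Qed.

Lemma F_low n (s : seq int) : size s = n -> uniq s -> 0%R \notin s ->
  (F n <= \sum_(x <- s) absz x)%N.
Proof.
elim: n s => [//|n IH] s Hsz Us H0.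
have sne : s != [::] by apply/eqP => Hs; rewrite Hs in Hsz.
have [x Hx Hmax] := exists_max sne.
have Hs : forall y, y \in s -> y != 0%R /\ (absz y <= absz x)%N.
  move=> y Hy; split; last exact: Hmax.
  by apply: contraNneq H0 => E; rewrite -E.
have [Hb _] := size_le_L Us Hs.
rewrite (sum_rem Hx) /=.
have := IH (rem x s).
rewrite size_rem // Hsz rem_uniq // => /(_ erefl isT).
have -> : (0%R \notin rem x s) by apply/negP => /mem_rem; apply/negP.
move=> /(_ isT); lia.
Qed.

Lemma odd_low k (s : seq int) : size s = (k + k)%N -> uniq s -> 0%R \notin s ->
  (\sum_(x <- s) x)%R != 0%R -> (k * k.+1 + 1 <= \sum_(x <- s) absz x)%N.
Proof.
move=> Hsz Us H0 Hsum.
have sne : s != [::].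
  by apply/eqP => Hs; move: Hsum; rewrite Hs big_nil eqxx.
have [x Hx Hmax] := exists_max sne.
have Hnz : forall y, y \in s -> y != 0%R.
  by move=> y Hy; apply: contraNneq H0 => E; rewrite -E.
case: (leqP (absz x) k) => Hxk.
  have [_ Heq] := size_le_L (M := k) Us
    (fun y Hy => conj (Hnz y Hy) (leq_trans (Hmax y Hy) Hxk)).
  by move: Hsum; rewrite Heq // eqxx.
have k0 : (0 < k)%N by move: sne; rewrite -size_eq0 Hsz; lia.
rewrite (sum_rem Hx).
have := F_low (n := (k.-1 + k.-1).+1) (s := rem x s).
rewrite size_rem // Hsz rem_uniq //.
have -> : (0%R \notin rem x s) by apply/negP => /mem_rem; apply/negP.
have [_ ->] := F_closed k.-1.
have -> : (k + k).-1 = (k.-1 + k.-1).+1 by lia.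
move=> /(_ erefl isT isT).
have -> : k.-1.+1 = k by lia.
move=> H; have E : (k * k.+1 + 1 = k.+1 + k * k)%N by lia.
by rewrite E; apply: leq_add.
Qed.

Lemma pv_inj n (p : 'S_n) i j : (i < n)%N -> (j < n)%N -> pv p i = pv p j -> i = j.
Proof.
move=> Hi Hj.
rewrite -[i]/(nat_of_ord (Ordinal Hi)) -[j]/(nat_of_ord (Ordinal Hj)) !pvE.
by move=> /val_inj /perm_inj [].
Qed.

Lemma size_dderiv n (p : 'S_n) : size (dderiv p) = n.-1.
Proof. by rewrite size_map size_iota. Qed.

Lemma dderiv_nz n (p : 'S_n) : 0%R \notin dderiv p.
Proof.
apply/negP => /mapP[i]; rewrite mem_iota add0n => Hi /eqP.
rewrite eq_sym subr_eq0 => /eqP [] /(pv_inj) E.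
have := E ltac:(lia) ltac:(lia); lia.
Qed.

Lemma sum_dderiv n (p : 'S_n) : (2 <= n)%N -> (\sum_(d <- dderiv p) d)%R != 0%R.
Proof.
move=> Hn; rewrite big_map.
rewrite (_ : iota 0 n.-1 = index_iota 0 n.-1); last by rewrite /index_iota subn0.
rewrite (telescope_sumr (fun i => Posz (pv p i))) // subr_eq0.
apply/negP => /eqP [] /pv_inj E.
have := E ltac:(lia) ltac:(lia); lia.
Qed.

Lemma locvar_ge n (p : 'S_n) x : x \in dderiv p -> (absz x <= locvar p)%N.
Proof.
move=> Hx; rewrite /locvar.
rewrite (perm_big _ (perm_to_rem Hx)) big_cons; apply: leq_maxl.
Qed.

Theorem part1 n : (2 <= n)%N -> forall p : 'S_n,
      costas1 p -> (n.+1 %/ 2 <= locvar p)%N.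
Proof.
move=> Hn p Hc.
have Hs : forall y, y \in dderiv p -> y != 0%R /\ (absz y <= locvar p)%N.
  move=> y Hy; split; last exact: locvar_ge.
  by apply: contraNneq (dderiv_nz p) => E; rewrite -E.
have [H1 H2] := size_le_L Hc Hs.
rewrite size_dderiv in H1 H2.
have H3 : n.-1 != (locvar p + locvar p)%N.
  by apply/eqP => /H2 E; move: (sum_dderiv p Hn); rewrite E eqxx.
lia.
Qed.

Lemma globvar_low_even k (q : 'S_(k + k)) : (0 < k)%N -> costas1 q ->
  (k * k <= globvar q)%N.
Proof.
move=> k0 Hc; rewrite /globvar.
have := F_low (n := (k.-1 + k.-1).+1) (s := dderiv q).
rewrite size_dderiv => /(_ ltac:(lia) Hc (dderiv_nz q)).
have [_ ->] := F_closed k.-1.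
have -> : k.-1.+1 = k by lia.
by [].
Qed.

Lemma globvar_low_odd k (q : 'S_(k.+1 + k)) : (0 < k)%N -> costas1 q ->
  (k * k.+1 + 1 <= globvar q)%N.
Proof.
move=> k0 Hc; rewrite /globvar.
apply: odd_low => //; first by rewrite size_dderiv; lia.
  exact: dderiv_nz.
apply: sum_dderiv; lia.
Qed.
Lemma piM_range m t : (1 <= t <= m)%N -> (1 <= piM m t <= m)%N.
Proof. rewrite /piM; case: ifP => Hm; case: ifP => Ht; lia. Qed.

Lemma piM_inj m t t' : (1 <= t <= m)%N -> (1 <= t' <= m)%N -> piM m t = piM m t' -> t = t'.
Proof. rewrite /piM; case: ifP => Hm; case: ifP => Ht; case: ifP => Ht'; lia. Qed.

Lemma piM1 m : piM m 1 = m.+1./2.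
Proof. rewrite /piM; case: ifP => Hm /=; lia. Qed.

Lemma dpiM m t : (1 <= t)%N -> (t < m)%N ->
  (Posz (piM m t.+1) - Posz (piM m t))%R = if odd t then Posz t else (- Posz t)%R.
Proof. rewrite /piM; case: ifP => Hm; case: ifP => Ht; case: ifP => Ht2; try case: ifP => Ht3; lia. Qed.

Lemma dpiM' m t : (1 <= t)%N -> (t < m)%N ->
  (odd t -> piM m t.+1 = piM m t + t)%N /\ (~~ odd t -> piM m t = piM m t.+1 + t)%N.
Proof.
move=> H1 H2; have := dpiM H1 H2.
case: ifP => Ho; split => // _; lia.
Qed.

Section MK.
Variables (n : nat) (f : nat -> nat) (Hr : forall i, (i < n)%N -> (f i < n)%N)
  (Hi : forall i j, (i < n)%N -> (j < n)%N -> f i = f j -> i = j).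
Definition mkf (i : 'I_n) : 'I_n := Ordinal (Hr (ltn_ord i)).
Lemma mkf_inj : injective mkf.
Proof. by move=> i j /(congr1 val) /= /Hi E; apply: val_inj; apply: E. Qed.
Definition mkperm : 'S_n := perm mkf_inj.
Lemma mkpermE i : val (mkperm i) = f i.
Proof. by rewrite permE. Qed.
Lemma dderiv_mk : dderiv mkperm = [seq ((f i.+1)%:Z - (f i)%:Z)%R | i <- iota 0 n.-1].
Proof. by apply: dderivE => i H; rewrite mkpermE. Qed.
End MK.

Lemma finish n (p : 'S_n) (dd : nat -> int) (S : seq int) :
  dderiv p = map dd (iota 0 n.-1) ->
  (forall i j, (i < n.-1)%N -> (j < n.-1)%N -> dd i = dd j -> i = j) ->
  (forall i, (i < n.-1)%N -> dd i \in S) -> uniq S -> size S = n.-1 ->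
  costas1 p /\ perm_eq (dderiv p) S.
Proof.
move=> HD Hinj HS US Hsz.
have UD : uniq (dderiv p).
  rewrite HD map_inj_in_uniq ?iota_uniq // => i j.
  rewrite !mem_iota !add0n => /andP[_ Hi] /andP[_ Hj]; exact: Hinj.
split => //.
have sub : {subset dderiv p <= S}.
  by move=> x; rewrite HD => /mapP[i]; rewrite mem_iota add0n => /andP[_ Hi] ->; apply: HS.
have Hle : (size S <= size (dderiv p))%N by rewrite size_dderiv Hsz.
have [_ Heq] := uniq_min_size UD sub Hle.
exact: uniq_perm.
Qed.

Lemma perm_mxE' n (s : 'S_n) i j : (perm_mx s : 'M[int]_n) i j = ((s i == j)%:R)%R.
Proof. by rewrite /perm_mx !mxE. Qed.

Lemma mulLmx m n (A : 'M[int]_(m, n)) i j : (Lmx m *m A)%R i j = A (rev_ord i) j.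
Proof.
rewrite !mxE (bigD1 (rev_ord i)) //= mxE big1 ?addr0.
  have -> : (i + (m - i.+1) == m.-1)%N = true by apply/eqP; have := ltn_ord i; lia.
  by rewrite mul1r.
move=> k Hk; rewrite mxE.
have -> : (i + k == m.-1)%N = false.
  apply/negP => /eqP E; move/eqP: Hk; apply; apply: val_inj => /=; have := ltn_ord i; lia.
by rewrite mul0r.
Qed.

Lemma mulmxL m n (A : 'M[int]_(m, n)) i j : (A *m Lmx n)%R i j = A i (rev_ord j).
Proof.
rewrite !mxE (bigD1 (rev_ord j)) //= mxE big1 ?addr0.
  have -> : ((n - j.+1) + j == n.-1)%N = true by apply/eqP; have := ltn_ord j; lia.
  by rewrite mulr1.
move=> k Hk; rewrite mxE.
have -> : (k + j == n.-1)%N = false.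
  apply/negP => /eqP E; move/eqP: Hk; apply; apply: val_inj => /=; have := ltn_ord j; lia.
by rewrite mulr0.
Qed.
Definition fA k i := if (i < k)%N then (piM k i.+1 - 1)%N else (k + piM k (k + k - i) - 1)%N.

Lemma fA_range k i : (i < k + k)%N -> (fA k i < k + k)%N.
Proof.
rewrite /fA; case: ifP => H Hi.
  have := piM_range (m := k) (t := i.+1); lia.
have := piM_range (m := k) (t := k + k - i); lia.
Qed.

Lemma fA_inj k i j : (i < k + k)%N -> (j < k + k)%N -> fA k i = fA k j -> i = j.
Proof.
rewrite /fA => Hi Hj; case: ifP => H1; case: ifP => H2.
- have := piM_inj (m := k) (t := i.+1) (t' := j.+1);
  have := piM_range (m := k) (t := i.+1); have := piM_range (m := k) (t := j.+1); lia.
- have := piM_range (m := k) (t := i.+1); have := piM_range (m := k) (t := k + k - j); lia.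
- have := piM_range (m := k) (t := j.+1); have := piM_range (m := k) (t := k + k - i); lia.
- have := piM_inj (m := k) (t := k + k - i) (t' := k + k - j);
  have := piM_range (m := k) (t := k + k - i); have := piM_range (m := k) (t := k + k - j); lia.
Qed.

Definition ddA k i : int :=
  if (i < k.-1)%N then (if odd i.+1 then Posz i.+1 else (- Posz i.+1)%R)
  else if i == k.-1 then Posz k
  else (if odd (k + k - i.+1) then (- Posz (k + k - i.+1))%R else Posz (k + k - i.+1)).

Lemma dA k i : (0 < k)%N -> (i < (k + k).-1)%N ->
  ((fA k i.+1)%:Z - (fA k i)%:Z)%R = ddA k i.
Proof.
move=> k0 Hi; rewrite /fA /ddA.
case: (ltnP i k.-1) => H1.
- have H2 : (i < k)%N by lia. have H3 : (i.+1 < k)%N by lia.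
  rewrite H2 H3.
  have := dpiM' (m := k) (t := i.+1) ltac:(lia) ltac:(lia).
  have := piM_range (m := k) (t := i.+1); have := piM_range (m := k) (t := i.+2).
  case: ifP; lia.
case: (eqVneq i k.-1) => H4.
- have -> : (i < k)%N by lia. have -> : (i.+1 < k)%N = false by lia.
  rewrite (_ : (k + k - i.+1 = i.+1)%N); last by lia.
  have := piM_range (m := k) (t := i.+1); lia.
have -> : (i < k)%N = false by lia. have -> : (i.+1 < k)%N = false by lia.
have := dpiM' (m := k) (t := k + k - i.+1) ltac:(lia) ltac:(lia).
have -> : (k + k - i.+1).+1 = (k + k - i)%N by lia.
have := piM_range (m := k) (t := k + k - i); have := piM_range (m := k) (t := k + k - i.+1).
case: ifP; lia.
Qed.

Lemma ddA_inj k i j : (0 < k)%N -> (i < (k + k).-1)%N -> (j < (k + k).-1)%N ->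
  ddA k i = ddA k j -> i = j.
Proof.
move=> k0 Hi Hj; rewrite /ddA.
repeat case: ifP => ?; lia.
Qed.

Definition Seven k := Lset k.-1 ++ [:: Posz k].

Lemma ddA_mem k i : (0 < k)%N -> (i < (k + k).-1)%N -> ddA k i \in Seven k.
Proof.
move=> k0 Hi; rewrite /ddA mem_cat mem_Lset mem_seq1.
repeat case: ifP => ?; lia.
Qed.

Lemma Seven_uniq k : uniq (Seven k).
Proof.
rewrite cat_uniq uniq_Lset /= andbT orbF; apply/negP; rewrite mem_Lset; lia.
Qed.

Lemma Seven_size k : (0 < k)%N -> size (Seven k) = (k + k).-1.
Proof. move=> k0; rewrite size_cat size_Lset /=; lia. Qed.

Lemma lshiftE m n (i : 'I_m) : nat_of_ord (lshift n i) = i. Proof. by []. Qed.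
Lemma rshiftE m n (i : 'I_n) : nat_of_ord (rshift m i) = (m + i)%N. Proof. by []. Qed.
Lemma boolR_eq (b c : bool) : (b -> c) -> (c -> b) -> ((b%:R)%R : int) = (c%:R)%R.
Proof. by case: b; case: c => // H1 H2; [have := H1 isT | have := H2 isT]. Qed.
Lemma boolR_0 (b : bool) : ~~ b -> ((b%:R)%R : int) = 0%R.
Proof. by case: b. Qed.

Lemma partA k : (0 < k)%N -> exists p : 'S_(k + k),
      Pmx p = block_mx (PiMx k) 0%R 0%R (Lmx k *m PiMx k)%R /\
      costas1 p /\ locvar p = (k + k).+1 %/ 2 /\
      (forall q : 'S_(k + k), costas1 q -> (globvar p <= globvar q)%N) /\
      4 * globvar p = (k + k) ^ 2.
Proof.
move=> k0.
pose p := mkperm (@fA_range k) (@fA_inj k).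
exists p.
have HD : dderiv p = map (ddA k) (iota 0 (k + k).-1).
  rewrite dderiv_mk; apply/eq_in_map => i; rewrite mem_iota => /andP[_ Hi].
  exact: dA.
have [Hc Hperm] := finish HD (fun i j => @ddA_inj k i j k0) (fun i => @ddA_mem k i k0)
  (Seven_uniq k) (Seven_size k0).
have Hglob : globvar p = (k * k)%N.
  rewrite /globvar (perm_big _ Hperm) big_cat sumabs_Lset big_cons big_nil /=; nia.
split.
{ apply/matrixP => i j; rewrite /Pmx perm_mxE'.
  case: (split_ordP i) => i' ->; case: (split_ordP j) => j' ->;
  rewrite ?block_mxEul ?block_mxEur ?block_mxEdl ?block_mxEdr ?mulLmx ?mxE
    -val_eqE /= mkpermE /fA ?lshiftE ?rshiftE;
  have := ltn_ord i'; have := ltn_ord j'.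
  - move=> ? Hi; rewrite Hi; apply: boolR_eq => /eqP H; apply/eqP;
    have := piM_range (m := k) (t := i'.+1); lia.
  - move=> ? Hi; rewrite Hi; apply: boolR_0; apply/eqP => H;
    have := piM_range (m := k) (t := i'.+1); lia.
  - move=> ? ?; rewrite (_ : (k + i' < k)%N = false); last by lia.
    apply: boolR_0; apply/eqP => H;
    have := piM_range (m := k) (t := (k + k - (k + i'))%N); lia.
  - move=> ? ?; rewrite (_ : (k + i' < k)%N = false); last by lia.
    rewrite (_ : (k + k - (k + i') = (k - i'.+1).+1)%N); last by lia.
    apply: boolR_eq => /eqP H; apply/eqP;
    have := piM_range (m := k) (t := (k - i'.+1).+1); lia. }
split => //.
split.
  apply/eqP; rewrite eqn_leq part1 ?andbT //; last by lia.
  apply/bigmax_leqP_seq => x Hx _.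
  move: Hx; rewrite (perm_mem Hperm) mem_cat mem_Lset mem_seq1; lia.
split.
  by move=> q Hq; rewrite Hglob; apply: globvar_low_even.
rewrite Hglob; nia.
Qed.
Definition Sodd k := Lset k.-1 ++ [:: Posz k; (- Posz k.+1)%R].

Lemma Sodd_uniq k : uniq (Sodd k).
Proof.
rewrite cat_uniq uniq_Lset /= ?inE ?mem_Lset ?andbT ?orbF; lia.
Qed.

Lemma Sodd_size k : (0 < k)%N -> size (Sodd k) = (k.+1 + k).-1.
Proof. move=> k0; rewrite size_cat size_Lset /=; lia. Qed.

Lemma Sodd_sum k : (0 < k)%N -> (\sum_(x <- Sodd k) absz x)%N = (k * k.+1 + 1)%N.
Proof. move=> k0; rewrite big_cat sumabs_Lset !big_cons big_nil /=; nia. Qed.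

Lemma finish_odd k (p : 'S_(k.+1 + k)) (dd : nat -> int) : (0 < k)%N ->
  dderiv p = map dd (iota 0 (k.+1 + k).-1) ->
  (forall i j, (i < (k.+1 + k).-1)%N -> (j < (k.+1 + k).-1)%N -> dd i = dd j -> i = j) ->
  (forall i, (i < (k.+1 + k).-1)%N -> dd i \in Sodd k) ->
  costas1 p /\ locvar p = (k.+1 + k).+1 %/ 2 /\
      (forall q : 'S_(k.+1 + k), costas1 q -> (globvar p <= globvar q)%N) /\
      4 * globvar p = (k.+1 + k) ^ 2 + 3.
Proof.
move=> k0 HD Hinj Hmem.
have [Hc Hperm] := finish HD Hinj Hmem (Sodd_uniq k) (Sodd_size k0).
have Hglob : globvar p = (k * k.+1 + 1)%N.
  by rewrite /globvar (perm_big _ Hperm) Sodd_sum.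
split => //.
split.
  apply/eqP; rewrite eqn_leq part1 ?andbT //; last by lia.
  apply/bigmax_leqP_seq => x Hx _.
  move: Hx; rewrite (perm_mem Hperm) mem_cat mem_Lset !inE; lia.
split.
  by move=> q Hq; rewrite Hglob; apply: globvar_low_odd.
rewrite Hglob; nia.
Qed.

Definition fB k i := if (i <= k)%N then (k + piM k.+1 (k.+1 - i) - 1)%N else (piM k (i - k) - 1)%N.

Lemma fB_range k i : (i < k.+1 + k)%N -> (fB k i < k.+1 + k)%N.
Proof.
rewrite /fB; case: ifP => H Hi.
  have := piM_range (m := k.+1) (t := k.+1 - i); lia.
have := piM_range (m := k) (t := i - k); lia.
Qed.

Lemma fB_inj k i j : (i < k.+1 + k)%N -> (j < k.+1 + k)%N -> fB k i = fB k j -> i = j.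
Proof.
rewrite /fB => Hi Hj; case: ifP => H1; case: ifP => H2.
- have := piM_inj (m := k.+1) (t := k.+1 - i) (t' := k.+1 - j);
  have := piM_range (m := k.+1) (t := k.+1 - i); have := piM_range (m := k.+1) (t := k.+1 - j); lia.
- have := piM_range (m := k.+1) (t := k.+1 - i); have := piM_range (m := k) (t := j - k); lia.
- have := piM_range (m := k.+1) (t := k.+1 - j); have := piM_range (m := k) (t := i - k); lia.
- have := piM_inj (m := k) (t := i - k) (t' := j - k);
  have := piM_range (m := k) (t := i - k); have := piM_range (m := k) (t := j - k); lia.
Qed.

Definition ddB k i : int :=
  if (i < k)%N then (if odd (k - i) then (- Posz (k - i))%R else Posz (k - i))
  else if i == k then (- Posz k.+1)%R
  else (if odd (i - k) then Posz (i - k) else (- Posz (i - k))%R).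

Lemma dB k i : (0 < k)%N -> ~~ odd k -> (i < (k.+1 + k).-1)%N ->
  ((fB k i.+1)%:Z - (fB k i)%:Z)%R = ddB k i.
Proof.
move=> k0 ek Hi; rewrite /fB /ddB.
case: (ltnP i k) => H1.
- have -> : (i <= k)%N by lia.
  have := dpiM' (m := k.+1) (t := k - i) ltac:(lia) ltac:(lia).
  have -> : (k - i).+1 = (k.+1 - i)%N by lia.
  have -> : (k.+1 - i.+1 = k - i)%N by lia.
  have := piM_range (m := k.+1) (t := k - i); have := piM_range (m := k.+1) (t := k.+1 - i).
  case: ifP; lia.
case: (eqVneq i k) => H4.
- subst i. rewrite leqnn.
  rewrite (_ : (k.+1 - k)%N = 1%N); last by lia.
  rewrite !piM1; lia.
have -> : (i <= k)%N = false by lia.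
have := dpiM' (m := k) (t := i - k) ltac:(lia) ltac:(lia).
have -> : (i - k).+1 = (i.+1 - k)%N by lia.
have := piM_range (m := k) (t := i.+1 - k); have := piM_range (m := k) (t := i - k).
case: ifP; lia.
Qed.

Lemma ddB_inj k i j : (0 < k)%N -> ~~ odd k -> (i < (k.+1 + k).-1)%N -> (j < (k.+1 + k).-1)%N ->
  ddB k i = ddB k j -> i = j.
Proof.
move=> k0 ek Hi Hj; rewrite /ddB.
repeat case: ifP => ?; lia.
Qed.

Lemma ddB_mem k i : (0 < k)%N -> ~~ odd k -> (i < (k.+1 + k).-1)%N -> ddB k i \in Sodd k.
Proof.
move=> k0 ek Hi; rewrite /ddB mem_cat mem_Lset !inE.
repeat case: ifP => ?; lia.
Qed.

Lemma partB k : (0 < k)%N -> ~~ odd k -> exists p : 'S_(k.+1 + k),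
      Pmx p = castmx (erefl (k.+1 + k), addnC k k.+1)
                (block_mx (0%R : 'M[int]_(k.+1, k)) (Lmx k.+1 *m PiMx k.+1)%R
                          (PiMx k) (0%R : 'M[int]_(k, k.+1))) /\
      costas1 p /\ locvar p = (k.+1 + k).+1 %/ 2 /\
      (forall q : 'S_(k.+1 + k), costas1 q -> (globvar p <= globvar q)%N) /\
      4 * globvar p = (k.+1 + k) ^ 2 + 3.
Proof.
move=> k0 ek.
pose p := mkperm (@fB_range k) (@fB_inj k).
exists p.
have HD : dderiv p = map (ddB k) (iota 0 (k.+1 + k).-1).
  rewrite dderiv_mk; apply/eq_in_map => i; rewrite mem_iota => /andP[_ Hi].
  exact: dB.
split; last first.
  apply: (finish_odd k0 HD).
    by move=> i j; apply: ddB_inj.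
  by move=> i; apply: ddB_mem.
apply/matrixP => i j; rewrite /Pmx perm_mxE' castmxE.
set ii := cast_ord _ i. set jj := cast_ord _ j.
have Hii : nat_of_ord ii = i by []. have Hjj : nat_of_ord jj = j by [].
clearbody ii jj.
case: (split_ordP ii) Hii => i' -> Hii; case: (split_ordP jj) Hjj => j' -> Hjj;
rewrite ?block_mxEul ?block_mxEur ?block_mxEdl ?block_mxEdr ?mulLmx ?mulmxL ?mxE
    -val_eqE /= mkpermE /fB; rewrite ?lshiftE ?rshiftE in Hii Hjj;
rewrite -Hii -Hjj; have := ltn_ord i'; have := ltn_ord j'.
- move=> ? ?; rewrite (_ : (i' <= k)%N); last by lia.
  apply: boolR_0; apply/eqP => H;
  have := piM_range (m := k.+1) (t := (k.+1 - i')%N); lia.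
- move=> ? ?; rewrite (_ : (i' <= k)%N); last by lia.
  rewrite (_ : (k.+1 - i' = (k.+1 - i'.+1).+1)%N); last by lia.
  apply: boolR_eq => /eqP H; apply/eqP;
  have := piM_range (m := k.+1) (t := (k.+1 - i'.+1).+1); lia.
- move=> ? ?; rewrite (_ : (k.+1 + i' <= k)%N = false); last by lia.
  rewrite (_ : (k.+1 + i' - k = i'.+1)%N); last by lia.
  apply: boolR_eq => /eqP H; apply/eqP;
  have := piM_range (m := k) (t := i'.+1); lia.
- move=> ? ?; rewrite (_ : (k.+1 + i' <= k)%N = false); last by lia.
  apply: boolR_0; apply/eqP => H;
  have := piM_range (m := k) (t := (k.+1 + i' - k)%N); lia.
Qed.

Definition fC k i := if (i <= k)%N then (k + k.+1 - piM k.+1 (k.+1 - i))%N else (k - piM k (i - k))%N.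

Lemma fC_range k i : (i < k.+1 + k)%N -> (fC k i < k.+1 + k)%N.
Proof.
rewrite /fC; case: ifP => H Hi.
  have := piM_range (m := k.+1) (t := k.+1 - i); lia.
have := piM_range (m := k) (t := i - k); lia.
Qed.

Lemma fC_inj k i j : (i < k.+1 + k)%N -> (j < k.+1 + k)%N -> fC k i = fC k j -> i = j.
Proof.
rewrite /fC => Hi Hj; case: ifP => H1; case: ifP => H2.
- have := piM_inj (m := k.+1) (t := k.+1 - i) (t' := k.+1 - j);
  have := piM_range (m := k.+1) (t := k.+1 - i); have := piM_range (m := k.+1) (t := k.+1 - j); lia.
- have := piM_range (m := k.+1) (t := k.+1 - i); have := piM_range (m := k) (t := j - k); lia.
- have := piM_range (m := k.+1) (t := k.+1 - j); have := piM_range (m := k) (t := i - k); lia.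
- have := piM_inj (m := k) (t := i - k) (t' := j - k);
  have := piM_range (m := k) (t := i - k); have := piM_range (m := k) (t := j - k); lia.
Qed.

Definition ddC k i : int :=
  if (i < k)%N then (if odd (k - i) then Posz (k - i) else (- Posz (k - i))%R)
  else if i == k then (- Posz k.+1)%R
  else (if odd (i - k) then (- Posz (i - k))%R else Posz (i - k)).

Lemma dC k i : odd k -> (i < (k.+1 + k).-1)%N ->
  ((fC k i.+1)%:Z - (fC k i)%:Z)%R = ddC k i.
Proof.
move=> ok Hi; rewrite /fC /ddC.
case: (ltnP i k) => H1.
- have -> : (i <= k)%N by lia.
  have := dpiM' (m := k.+1) (t := k - i) ltac:(lia) ltac:(lia).
  have -> : (k - i).+1 = (k.+1 - i)%N by lia.
  have -> : (k.+1 - i.+1 = k - i)%N by lia.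
  have := piM_range (m := k.+1) (t := k - i); have := piM_range (m := k.+1) (t := k.+1 - i).
  case: ifP; lia.
case: (eqVneq i k) => H4.
- subst i. rewrite leqnn.
  rewrite (_ : (k.+1 - k)%N = 1%N); last by lia.
  rewrite !piM1; lia.
have -> : (i <= k)%N = false by lia.
have := dpiM' (m := k) (t := i - k) ltac:(lia) ltac:(lia).
have -> : (i - k).+1 = (i.+1 - k)%N by lia.
have := piM_range (m := k) (t := i.+1 - k); have := piM_range (m := k) (t := i - k).
case: ifP; lia.
Qed.

Lemma ddC_inj k i j : odd k -> (i < (k.+1 + k).-1)%N -> (j < (k.+1 + k).-1)%N ->
  ddC k i = ddC k j -> i = j.
Proof.
move=> ok Hi Hj; rewrite /ddC.
repeat case: ifP => ?; lia.
Qed.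

Lemma ddC_mem k i : odd k -> (i < (k.+1 + k).-1)%N -> ddC k i \in Sodd k.
Proof.
move=> ok Hi; rewrite /ddC mem_cat mem_Lset !inE.
repeat case: ifP => ?; lia.
Qed.

Lemma partC k : odd k -> exists p : 'S_(k.+1 + k),
      Pmx p = castmx (erefl (k.+1 + k), addnC k k.+1)
                (block_mx (0%R : 'M[int]_(k.+1, k)) (Lmx k.+1 *m PiMx k.+1 *m Lmx k.+1)%R
                          (PiMx k *m Lmx k)%R (0%R : 'M[int]_(k, k.+1))) /\
      costas1 p /\ locvar p = (k.+1 + k).+1 %/ 2 /\
      (forall q : 'S_(k.+1 + k), costas1 q -> (globvar p <= globvar q)%N) /\
      4 * globvar p = (k.+1 + k) ^ 2 + 3.
Proof.
move=> ok.
have k0 : (0 < k)%N by lia.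
pose p := mkperm (@fC_range k) (@fC_inj k).
exists p.
have HD : dderiv p = map (ddC k) (iota 0 (k.+1 + k).-1).
  rewrite dderiv_mk; apply/eq_in_map => i; rewrite mem_iota => /andP[_ Hi].
  exact: dC.
split; last first.
  apply: (finish_odd k0 HD).
    by move=> i j; apply: ddC_inj.
  by move=> i; apply: ddC_mem.
apply/matrixP => i j; rewrite /Pmx perm_mxE' castmxE.
set ii := cast_ord _ i. set jj := cast_ord _ j.
have Hii : nat_of_ord ii = i by []. have Hjj : nat_of_ord jj = j by [].
clearbody ii jj.
case: (split_ordP ii) Hii => i' -> Hii; case: (split_ordP jj) Hjj => j' -> Hjj;
rewrite ?block_mxEul ?block_mxEur ?block_mxEdl ?block_mxEdr ?mulmxL ?mulLmx ?mxE
    -val_eqE /= mkpermE /fC; rewrite ?lshiftE ?rshiftE in Hii Hjj;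
rewrite -Hii -Hjj; have := ltn_ord i'; have := ltn_ord j'.
- move=> ? ?; rewrite (_ : (i' <= k)%N); last by lia.
  apply: boolR_0; apply/eqP => H;
  have := piM_range (m := k.+1) (t := (k.+1 - i')%N); lia.
- move=> ? ?; rewrite (_ : (i' <= k)%N); last by lia.
  rewrite (_ : (k.+1 - i' = (k.+1 - i'.+1).+1)%N); last by lia.
  apply: boolR_eq => /eqP H; apply/eqP;
  have := piM_range (m := k.+1) (t := (k.+1 - i'.+1).+1); lia.
- move=> ? ?; rewrite (_ : (k.+1 + i' <= k)%N = false); last by lia.
  rewrite (_ : (k.+1 + i' - k = i'.+1)%N); last by lia.
  apply: boolR_eq => /eqP H; apply/eqP;
  have := piM_range (m := k) (t := i'.+1); lia.
- move=> ? ?; rewrite (_ : (k.+1 + i' <= k)%N = false); last by lia.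
  apply: boolR_0; apply/eqP => H;
  have := piM_range (m := k) (t := (k.+1 + i' - k)%N); lia.
Qed.

Theorem theorem3p2 :
  (* lower bound on the local variation *)
  (forall n : nat, (2 <= n)%N -> forall p : 'S_n,
      costas1 p -> (n.+1 %/ 2 <= locvar p)%N) /\
  (* existence of an optimal 1-Costas permutation *)
  (forall n : nat, (2 <= n)%N -> exists p : 'S_n,
      costas1 p /\ locvar p = n.+1 %/ 2) /\
  (* (i) n = 2k *)
  (forall k : nat, (0 < k)%N -> exists p : 'S_(k + k),
      Pmx p = block_mx (PiMx k) 0%R 0%R (Lmx k *m PiMx k)%R /\
      costas1 p /\ locvar p = (k + k).+1 %/ 2 /\
      (forall q : 'S_(k + k), costas1 q -> (globvar p <= globvar q)%N) /\
      4 * globvar p = (k + k) ^ 2) /\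
  (* (ii) n = 2k+1, k even *)
  (forall k : nat, (0 < k)%N -> ~~ odd k -> exists p : 'S_(k.+1 + k),
      Pmx p = castmx (erefl (k.+1 + k), addnC k k.+1)
                (block_mx (0%R : 'M[int]_(k.+1, k)) (Lmx k.+1 *m PiMx k.+1)%R
                          (PiMx k) (0%R : 'M[int]_(k, k.+1))) /\
      costas1 p /\ locvar p = (k.+1 + k).+1 %/ 2 /\
      (forall q : 'S_(k.+1 + k), costas1 q -> (globvar p <= globvar q)%N) /\
      4 * globvar p = (k.+1 + k) ^ 2 + 3) /\
  (* (iii) n = 2k+1, k odd *)
  (forall k : nat, odd k -> exists p : 'S_(k.+1 + k),
      Pmx p = castmx (erefl (k.+1 + k), addnC k k.+1)
                (block_mx (0%R : 'M[int]_(k.+1, k)) (Lmx k.+1 *m PiMx k.+1 *m Lmx k.+1)%R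
                          (PiMx k *m Lmx k)%R (0%R : 'M[int]_(k, k.+1))) /\
      costas1 p /\ locvar p = (k.+1 + k).+1 %/ 2 /\
      (forall q : 'S_(k.+1 + k), costas1 q -> (globvar p <= globvar q)%N) /\
      4 * globvar p = (k.+1 + k) ^ 2 + 3).
Proof.
split; first exact: part1.
split.
  move=> n Hn.
  case: (boolP (odd n)) => on.
    have E : n = (n./2.+1 + n./2)%N by lia.
    move: (n./2) E => k E; subst n.
    case: (boolP (odd k)) => ok.
      by have [p [_ [Hc [Hl _]]]] := partC ok; exists p.
    have k0 : (0 < k)%N by lia.
    by have [p [_ [Hc [Hl _]]]] := partB k0 ok; exists p.
  have E : n = (n./2 + n./2)%N by lia.
  move: (n./2) E => k E; subst n.
  have k0 : (0 < k)%N by lia.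
  by have [p [_ [Hc [Hl _]]]] := partA k0; exists p.
split; first exact: partA.
split; first exact: partB.
exact: partC.
Qed.
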